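(* Let $-\infty<a<b<\infty$, $f:[a,b]\times\mathbb{R}^N\times\mathbb{R}^N\to\mathbb{R}$ of class $C^1$, $\Phi(u)=\int_a^bf(x,u(x),u'(x))dx$, $u^0\in C^1([a,b],\mathbb{R}^N)$, $I^{D}_a,I^{D}_b\subset\{1,\dots,N\}$, $I^{N}_x=\{1,\dots,N\}\setminus I^{D}_x$, and $\mathcal{M}=\{u\in C^1([a,b],\mathbb{R}^N):(u_i-u^0_i)(x)=0\text{ for } i\in I^{D}_x,\ x\in\{a,b\}\}$, $\mathcal{M}_N=\{u\in\mathcal{M}: u_i'(x)=0\text{ for } i\in I^{N}_x,\ x\in\{a,b\}\}$. If $u^0$ is a weak minimizer of $\Phi$ in $\mathcal{M}_N$, then $u^0$ is a weak minimizer of $\Phi$ in $\mathcal{M}$. Conversely, if $u^0$ is a weak minimizer of $\Phi$ in $\mathcal{M}$ and $u^0\in\mathcal{M}_N$, then $u^0$ is a weak minimizer of $\Phi$ in $\mathcal{M}_N$.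
   Context: A function $w$ in a set $\mathcal{S}\subset C^1([a,b],\mathbb{R}^N)$ is a weak minimizer of $\Phi$ in $\mathcal{S}$ if there is $\varepsilon>0$ with $\Phi(v)\ge\Phi(w)$ for all $v\in\mathcal{S}$ with $\|v-w\|_{C^1}<\varepsilon$, where $\|v\|_{C^1}=\max|v|+\max|v'|$. *)

(* Defs.v *)
From Stdlib Require Import Reals.
From Coquelicot Require Import Coquelicot.
From mathcomp Require Import ssreflect ssrbool eqtype ssrnat seq fintype.
Open Scope R_scope.

Definition vec (N : nat) := 'I_N -> R.

Definition vnorm {N : nat} (v : vec N) : R :=
  sqrt (foldr Rplus 0 (map (fun i => (v i) ^ 2) (enum 'I_N))).

Definition in_ab (a b x : R) : Prop := a <= x <= b.

Definition has_wderiv (a b : R) (g : R -> R) (x l : R) : Prop :=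
  filterlim (fun y => (g y - g x) / (y - x))
    (within (fun y => in_ab a b y /\ y <> x) (locally x)) (locally l).

Definition cont_on (a b : R) (g : R -> R) : Prop :=
  forall x, in_ab a b x ->
    filterlim g (within (in_ab a b) (locally x)) (locally (g x)).

Definition is_C1 {N : nat} (a b : R) (u u' : R -> vec N) : Prop :=
  forall i : 'I_N,
    (forall x, in_ab a b x -> has_wderiv a b (fun t => u t i) x (u' x i)) /\
    cont_on a b (fun t => u' t i).

Definition supnorm {N : nat} (a b : R) (g : R -> vec N) : R :=
  real (Lub_Rbar (fun r => exists x, in_ab a b x /\ r = vnorm (g x))).

Definition C1dist {N : nat} (a b : R) (v v' w w' : R -> vec N) : R :=
  supnorm a b (fun x i => v x i - w x i) + supnorm a b (fun x i => v' x i - w' x i).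

Definition shift {N : nat} (y : vec N) (i : 'I_N) (t : R) : vec N :=
  fun j => if j == i then y j + t else y j.

Definition cont_dom {N : nat} (a b : R) (g : R -> vec N -> vec N -> R) : Prop :=
  forall x y p, in_ab a b x -> forall eps, 0 < eps -> exists delta, 0 < delta /\
    forall x' y' p', in_ab a b x' -> Rabs (x' - x) < delta ->
      (forall i, Rabs (y' i - y i) < delta) -> (forall i, Rabs (p' i - p i) < delta) ->
      Rabs (g x' y' p' - g x y p) < eps.

Definition is_C1_lagr {N : nat} (a b : R) (f : R -> vec N -> vec N -> R) : Prop :=
  cont_dom a b f /\
  exists (fx : R -> vec N -> vec N -> R) (fy fp : 'I_N -> R -> vec N -> vec N -> R),
    cont_dom a b fx /\ (forall i, cont_dom a b (fy i)) /\ (forall i, cont_dom a b (fp i)) /\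
    forall x y p, in_ab a b x ->
      has_wderiv a b (fun t => f t y p) x (fx x y p) /\
      (forall i, is_derive (fun t => f x (shift y i t) p) 0 (fy i x y p)) /\
      (forall i, is_derive (fun t => f x y (shift p i t)) 0 (fp i x y p)).

Definition Phi {N : nat} (f : R -> vec N -> vec N -> R) (a b : R) (u u' : R -> vec N) : R :=
  RInt (fun x => f x (u x) (u' x)) a b.

Definition in_M {N : nat} (a b : R) (IDa IDb : 'I_N -> bool) (u0 : R -> vec N)
  (u u' : R -> vec N) : Prop :=
  is_C1 a b u u' /\
  forall i, (IDa i -> u a i - u0 a i = 0) /\ (IDb i -> u b i - u0 b i = 0).

Definition in_MN {N : nat} (a b : R) (IDa IDb : 'I_N -> bool) (u0 : R -> vec N)
  (u u' : R -> vec N) : Prop :=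
  in_M a b IDa IDb u0 u u' /\
  forall i, (~~ IDa i -> u' a i = 0) /\ (~~ IDb i -> u' b i = 0).

Definition weak_min {N : nat} (f : R -> vec N -> vec N -> R) (a b : R)
  (S : (R -> vec N) -> (R -> vec N) -> Prop) (w w' : R -> vec N) : Prop :=
  S w w' /\
  exists eps, 0 < eps /\
    forall v v', S v v' -> C1dist a b v v' w w' < eps -> Phi f a b w w' <= Phi f a b v v'.

(* Main.v *)
Require Import Defs.
From Stdlib Require Import Reals Lra Psatz FunctionalExtensionality IndefiniteDescription Classical.
From Coquelicot Require Import Coquelicot.
From mathcomp Require Import ssreflect ssrbool eqtype ssrnat seq fintype.
Open Scope R_scope.

Definition WD (a b : R) (g : R -> R) (x l : R) : Prop :=
  forall eps, 0 < eps -> exists d, 0 < d /\ forall y, in_ab a b y -> y <> x ->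
    Rabs (y - x) < d -> Rabs ((g y - g x) / (y - x) - l) < eps.

Definition CW (a b : R) (g : R -> R) (x : R) : Prop :=
  forall eps, 0 < eps -> exists d, 0 < d /\ forall y, in_ab a b y ->
    Rabs (y - x) < d -> Rabs (g y - g x) < eps.

Lemma ball_R (x y e : R) : ball x e y <-> Rabs (y - x) < e.
Proof. unfold ball; simpl; unfold AbsRing_ball, abs, minus, plus, opp; simpl. tauto. Qed.

Lemma within_eps (D : R -> Prop) (F : R -> R) x l :
  filterlim F (within D (locally x)) (locally l) ->
  forall eps, 0 < eps -> exists d, 0 < d /\ forall y, D y -> Rabs (y - x) < d -> Rabs (F y - l) < eps.
Proof.
  intros H eps He.
  destruct (proj1 (filterlim_locally _ _) H (mkposreal eps He)) as [d Hd].
  exists d; split; [apply cond_pos|].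
  intros y Dy Hy. apply ball_R. apply Hd; [apply ball_R; exact Hy| exact Dy].
Qed.

Lemma eps_within (D : R -> Prop) (F : R -> R) x l :
  (forall eps, 0 < eps -> exists d, 0 < d /\ forall y, D y -> Rabs (y - x) < d -> Rabs (F y - l) < eps) ->
  filterlim F (within D (locally x)) (locally l).
Proof.
  intros H. apply (proj2 (filterlim_locally _ _)). intros [eps He].
  destruct (H eps He) as [d [Hd H1]].
  exists (mkposreal d Hd). intros y Hy Dy. apply ball_R. apply H1; [exact Dy|].
  apply ball_R in Hy; exact Hy.
Qed.

Lemma WD_iff a b g x l : has_wderiv a b g x l <-> WD a b g x l.
Proof.
  split.
  - intros H eps He. destruct (within_eps _ _ _ _ H eps He) as [d [Hd H1]].
    exists d; split; [exact Hd|]. intros y Hy Hne Hyd. apply H1; [split; assumption|exact Hyd].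
  - intros H. apply eps_within. intros eps He. destruct (H eps He) as [d [Hd H1]].
    exists d; split; [exact Hd|]. intros y [Hy Hne] Hyd. apply H1; assumption.
Qed.

Lemma CW_cont_on a b g : cont_on a b g <-> forall x, in_ab a b x -> CW a b g x.
Proof.
  split.
  - intros H x Hx eps He. destruct (within_eps _ _ _ _ (H x Hx) eps He) as [d [Hd H1]].
    exists d; split; [exact Hd|]. intros y Hy Hyd. apply H1; assumption.
  - intros H x Hx. apply eps_within. intros eps He. destruct (H x Hx eps He) as [d [Hd H1]].
    exists d; split; [exact Hd|]. intros y Hy Hyd. apply H1; assumption.
Qed.

Lemma WD_CW a b g x l : WD a b g x l -> CW a b g x.
Proof.
  intros H eps He. destruct (H 1 Rlt_0_1) as [d [Hd H1]].
  exists (Rmin d (eps / (Rabs l + 1))). split.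
  { apply Rmin_pos; [exact Hd|]. apply Rdiv_lt_0_compat; [exact He|]. pose proof (Rabs_pos l); lra. }
  intros y Hy Hyd. destruct (Req_dec y x) as [->|Hne].
  { replace (g x - g x) with 0 by ring. rewrite Rabs_R0; exact He. }
  have Hq := H1 y Hy Hne (Rlt_le_trans _ _ _ Hyd (Rmin_l _ _)).
  have Hyd2 := Rlt_le_trans _ _ _ Hyd (Rmin_r _ _).
  have Hnz : y - x <> 0 by lra.
  replace (g y - g x) with (((g y - g x) / (y - x)) * (y - x)) by (field; exact Hnz).
  rewrite Rabs_mult.
  have Hq2 : Rabs ((g y - g x) / (y - x)) <= Rabs l + 1.
  { have := Rabs_triang_inv ((g y - g x) / (y - x)) l. lra. }
  have Hp : 0 < Rabs (y - x) by apply Rabs_pos_lt.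
  have Hl : 0 < Rabs l + 1 by (pose proof (Rabs_pos l); lra).
  apply Rle_lt_trans with ((Rabs l + 1) * Rabs (y - x)).
  { apply Rmult_le_compat_r; [lra| exact Hq2]. }
  apply Rlt_le_trans with ((Rabs l + 1) * (eps / (Rabs l + 1))).
  { apply Rmult_lt_compat_l; lra. }
  right; field; lra.
Qed.

Lemma WD_ext a b g g' x l : WD a b g x l -> in_ab a b x -> (forall t, in_ab a b t -> g' t = g t) -> WD a b g' x l.
Proof.
  intros H Hx He eps Heps. destruct (H eps Heps) as [d [Hd H1]]. exists d; split; [exact Hd|].
  intros y Hy Hne Hyd. rewrite (He y Hy) (He x Hx). apply H1; assumption.
Qed.

Lemma CW_ext a b g g' x : CW a b g x -> in_ab a b x -> (forall t, in_ab a b t -> g' t = g t) -> CW a b g' x.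
Proof.
  intros H Hx He eps Heps. destruct (H eps Heps) as [d [Hd H1]]. exists d; split; [exact Hd|].
  intros y Hy Hyd. rewrite (He y Hy) (He x Hx). apply H1; assumption.
Qed.

Lemma WD_plus a b g1 g2 x l1 l2 : WD a b g1 x l1 -> WD a b g2 x l2 ->
  WD a b (fun t => g1 t + g2 t) x (l1 + l2).
Proof.
  intros H1 H2 eps He. destruct (H1 (eps/2) ltac:(lra)) as [d1 [Hd1 K1]].
  destruct (H2 (eps/2) ltac:(lra)) as [d2 [Hd2 K2]].
  exists (Rmin d1 d2); split; [apply Rmin_pos; assumption|].
  intros y Hy Hne Hyd. have A := K1 y Hy Hne (Rlt_le_trans _ _ _ Hyd (Rmin_l _ _)).
  have B := K2 y Hy Hne (Rlt_le_trans _ _ _ Hyd (Rmin_r _ _)).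
  have Hnz : y - x <> 0 by lra.
  replace ((g1 y + g2 y - (g1 x + g2 x)) / (y - x) - (l1 + l2)) with
    (((g1 y - g1 x) / (y - x) - l1) + ((g2 y - g2 x) / (y - x) - l2)) by (field; exact Hnz).
  eapply Rle_lt_trans; [apply Rabs_triang|]. lra.
Qed.

Lemma CW_plus a b g1 g2 x : CW a b g1 x -> CW a b g2 x -> CW a b (fun t => g1 t + g2 t) x.
Proof.
  intros H1 H2 eps He. destruct (H1 (eps/2) ltac:(lra)) as [d1 [Hd1 K1]].
  destruct (H2 (eps/2) ltac:(lra)) as [d2 [Hd2 K2]].
  exists (Rmin d1 d2); split; [apply Rmin_pos; assumption|].
  intros y Hy Hyd. have A := K1 y Hy (Rlt_le_trans _ _ _ Hyd (Rmin_l _ _)).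
  have B := K2 y Hy (Rlt_le_trans _ _ _ Hyd (Rmin_r _ _)).
  replace (g1 y + g2 y - (g1 x + g2 x)) with ((g1 y - g1 x) + (g2 y - g2 x)) by ring.
  eapply Rle_lt_trans; [apply Rabs_triang|]. lra.
Qed.

Lemma CW_scal a b g x c : CW a b g x -> CW a b (fun t => c * g t) x.
Proof.
  intros H eps He. destruct (H (eps / (Rabs c + 1))) as [d [Hd K]].
  { apply Rdiv_lt_0_compat; [exact He|]. pose proof (Rabs_pos c); lra. }
  exists d; split; [exact Hd|]. intros y Hy Hyd. have A := K y Hy Hyd.
  replace (c * g y - c * g x) with (c * (g y - g x)) by ring. rewrite Rabs_mult.
  have Hl : 0 < Rabs c + 1 by (pose proof (Rabs_pos c); lra).
  apply Rle_lt_trans with ((Rabs c + 1) * Rabs (g y - g x)).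
  { apply Rmult_le_compat_r; [apply Rabs_pos| lra]. }
  apply Rlt_le_trans with ((Rabs c + 1) * (eps / (Rabs c + 1))).
  { apply Rmult_lt_compat_l; lra. }
  right; field; lra.
Qed.

Lemma WD_scal a b g x l c : WD a b g x l -> WD a b (fun t => c * g t) x (c * l).
Proof.
  intros H eps He. destruct (H (eps / (Rabs c + 1))) as [d [Hd K]].
  { apply Rdiv_lt_0_compat; [exact He|]. pose proof (Rabs_pos c); lra. }
  exists d; split; [exact Hd|]. intros y Hy Hne Hyd. have A := K y Hy Hne Hyd.
  have Hnz : y - x <> 0 by lra.
  replace ((c * g y - c * g x) / (y - x) - c * l) with (c * ((g y - g x) / (y - x) - l)) by (field; exact Hnz).
  rewrite Rabs_mult.
  have Hl : 0 < Rabs c + 1 by (pose proof (Rabs_pos c); lra).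
  apply Rle_lt_trans with ((Rabs c + 1) * Rabs ((g y - g x) / (y - x) - l)).
  { apply Rmult_le_compat_r; [apply Rabs_pos| lra]. }
  apply Rlt_le_trans with ((Rabs c + 1) * (eps / (Rabs c + 1))).
  { apply Rmult_lt_compat_l; lra. }
  right; field; lra.
Qed.

Lemma cpt_CW a b g x : continuity_pt g x -> CW a b g x.
Proof.
  intros H eps He. destruct (H eps He) as [d [Hd K]]. exists d; split; [exact Hd|].
  intros y Hy Hyd. destruct (Req_dec y x) as [->|Hne].
  { replace (g x - g x) with 0 by ring. rewrite Rabs_R0; exact He. }
  apply (K y). split; [split; [exact I| auto]| exact Hyd].
Qed.

Lemma dpl_WD a b g x l : derivable_pt_lim g x l -> WD a b g x l.
Proof.
  intros H eps He. destruct (H eps He) as [[d Hd] K]. exists d; split; [exact Hd|].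
  intros y Hy Hne Hyd. have Hnz : y - x <> 0 by lra.
  have := K (y - x) Hnz Hyd. replace (x + (y - x)) with y by ring. auto.
Qed.


Definition clamp (a b x : R) := Rmin b (Rmax a x).

Lemma clamp_in a b x : a <= b -> in_ab a b (clamp a b x).
Proof. intros H; unfold clamp, in_ab, Rmin, Rmax; repeat destruct Rle_dec; lra. Qed.
Lemma clamp_id a b x : in_ab a b x -> clamp a b x = x.
Proof. unfold clamp, in_ab, Rmin, Rmax; intros; repeat destruct Rle_dec; lra. Qed.
Lemma clamp_lip a b x y : a <= b -> Rabs (clamp a b y - clamp a b x) <= Rabs (y - x).
Proof. intros H; unfold clamp, Rmin, Rmax; unfold Rabs; repeat destruct Rle_dec; repeat destruct Rcase_abs; lra. Qed.

Lemma clamp_cont a b g x : a <= b -> (forall x, in_ab a b x -> CW a b g x) ->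
  continuity_pt (fun t => g (clamp a b t)) x.
Proof.
  intros Hab H eps He. destruct (H (clamp a b x) (clamp_in a b x Hab) eps He) as [d [Hd K]].
  exists d; split; [exact Hd|]. intros y [_ Hy]. simpl in *. unfold R_dist in *.
  apply K; [apply clamp_in; exact Hab|]. eapply Rle_lt_trans; [apply clamp_lip; exact Hab| exact Hy].
Qed.

Lemma CW_ex_RInt a b g : a <= b -> (forall x, in_ab a b x -> CW a b g x) -> ex_RInt g a b.
Proof.
  intros Hab H. apply (ex_RInt_ext (V:=R_NormedModule) (fun t => g (clamp a b t)) g a b).
  { intros x Hx. rewrite Rmin_left in Hx; [|exact Hab]. rewrite Rmax_right in Hx; [|exact Hab].
    rewrite clamp_id; [reflexivity| unfold in_ab; lra]. }
  apply: (ex_RInt_continuous (V:=R_CompleteNormedModule)). intros z _. apply continuity_pt_filterlim. apply clamp_cont; assumption.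
Qed.

Lemma CW_bounded a b g : a <= b -> (forall x, in_ab a b x -> CW a b g x) ->
  exists M, forall x, in_ab a b x -> Rabs (g x) <= M.
Proof.
  intros Hab H.
  destruct (continuity_ab_maj (fun t => Rabs (g (clamp a b t))) a b Hab) as [Mx [HM _]].
  { intros c _. apply (continuity_pt_comp (fun t => g (clamp a b t)) Rabs).
    - apply clamp_cont; assumption.
    - apply Rcontinuity_abs. }
  exists (Rabs (g (clamp a b Mx))). intros x Hx. have := HM x Hx. rewrite clamp_id; [auto| exact Hx].
Qed.

Lemma fin_min (N : nat) (P : 'I_N -> R -> Prop) :
  (forall i d d', 0 < d' -> d' <= d -> P i d -> P i d') ->
  (forall i, exists d, 0 < d /\ P i d) -> exists d, 0 < d /\ forall i, P i d.
Proof.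
  intros Hm H.
  suff: forall l : seq 'I_N, exists d, 0 < d /\ forall i, i \in l -> P i d.
  { intros K. destruct (K (enum 'I_N)) as [d [Hd K2]]. exists d; split; [exact Hd|].
    intros i. apply K2. by rewrite mem_enum. }
  elim => [|j l IH].
  - exists 1; split; [lra|]. intros i Hi. by rewrite in_nil in Hi.
  - destruct IH as [d1 [Hd1 K1]]. destruct (H j) as [d2 [Hd2 K2]].
    exists (Rmin d1 d2); split; [apply Rmin_pos; assumption|].
    intros i Hi. rewrite in_cons in Hi. case/orP: Hi => Hi.
    + move/eqP: Hi => ->. apply (Hm j d2); [apply Rmin_pos; assumption| apply Rmin_r| exact K2].
    + apply (Hm i d1); [apply Rmin_pos; assumption| apply Rmin_l| apply K1; exact Hi].
Qed.

Lemma fin_max (N : nat) (P : 'I_N -> R -> Prop) :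
  (forall i M M', M <= M' -> P i M -> P i M') ->
  (forall i, exists M, P i M) -> exists M, forall i, P i M.
Proof.
  intros Hm H.
  suff: forall l : seq 'I_N, exists M, forall i, i \in l -> P i M.
  { intros K. destruct (K (enum 'I_N)) as [d K2]. exists d.
    intros i. apply K2. by rewrite mem_enum. }
  elim => [|j l IH].
  - exists 0. intros i Hi. by rewrite in_nil in Hi.
  - destruct IH as [d1 K1]. destruct (H j) as [d2 K2].
    exists (Rmax d1 d2).
    intros i Hi. rewrite in_cons in Hi. case/orP: Hi => Hi.
    + move/eqP: Hi => ->. apply (Hm j d2); [apply Rmax_r| exact K2].
    + apply (Hm i d1); [apply Rmax_l| apply K1; exact Hi].
Qed.

Definition sumabs {N : nat} (c : vec N) : R := foldr (fun i acc => Rabs (c i) + acc) 0 (enum 'I_N).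

Lemma foldr_pos {N : nat} (c : vec N) (l : seq 'I_N) : 0 <= foldr (fun i acc => Rabs (c i) + acc) 0 l.
Proof. elim: l => [|k l' IH'] /=; [lra|]. pose proof (Rabs_pos (c k)); lra. Qed.

Lemma sumabs_ge {N : nat} (c : vec N) i : Rabs (c i) <= sumabs c.
Proof.
  unfold sumabs. have : i \in enum 'I_N by rewrite mem_enum.
  elim: (enum 'I_N) => [|j l IH] Hi.
  - by rewrite in_nil in Hi.
  - simpl. rewrite in_cons in Hi. case/orP: Hi => Hi.
    + move/eqP: Hi => ->. have := foldr_pos c l. lra.
    + specialize (IH Hi). pose proof (Rabs_pos (c j)); lra.
Qed.

Lemma sumabs_pos {N : nat} (c : vec N) : 0 <= sumabs c.
Proof. unfold sumabs. elim: (enum 'I_N) => [|k l' IH'] /=; [lra|]. pose proof (Rabs_pos (c k)); lra. Qed.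

Definition sqs {N : nat} (l : seq 'I_N) (x : vec N) : R := foldr Rplus 0 (map (fun i => (x i) ^ 2) l).

Lemma sqs_pos {N : nat} l (x : vec N) : 0 <= sqs l x.
Proof. unfold sqs; elim: l => [|k l IH]; cbn [foldr map]; [lra|]. pose proof (pow2_ge_0 (x k)); lra. Qed.

Lemma sqs_add {N : nat} l (x y z : vec N) : (forall i, z i = x i + y i) ->
  sqs l z <= 2 * sqs l x + 2 * sqs l y.
Proof. intros H; unfold sqs; elim: l => [|k l IH]; cbn [foldr map]; [lra|]. rewrite H.
  assert ((x k + y k) ^ 2 <= 2 * x k ^ 2 + 2 * y k ^ 2) by (pose proof (pow2_ge_0 (x k - y k)); nra). lra. Qed.

Lemma sqs_dom {N : nat} l (x y : vec N) : (forall i, Rabs (x i) <= Rabs (y i)) -> sqs l x <= sqs l y.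
Proof. intros H; unfold sqs; elim: l => [|k l IH]; cbn [foldr map]; [lra|].
  have : x k ^ 2 <= y k ^ 2.
  { specialize (H k). rewrite -(pow2_abs (x k)) -(pow2_abs (y k)). pose proof (Rabs_pos (x k)). nra. }
  lra. Qed.

Lemma sqs_scal {N : nat} l (x z : vec N) r : (forall i, z i = r * x i) -> sqs l z = r ^ 2 * sqs l x.
Proof. intros H; unfold sqs; elim: l => [|k l IH]; cbn [foldr map]; [ring|]. rewrite H IH. ring. Qed.

Lemma vnorm_sqs {N : nat} (x : vec N) : vnorm x = sqrt (sqs (enum 'I_N) x).
Proof. reflexivity. Qed.

Lemma vnorm_pos {N : nat} (x : vec N) : 0 <= vnorm x.
Proof. apply sqrt_pos. Qed.

Lemma vnorm_add {N : nat} (x y z : vec N) : (forall i, z i = x i + y i) ->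
  vnorm z <= 2 * (vnorm x + vnorm y).
Proof.
  intros H. rewrite !vnorm_sqs.
  have A := sqs_add (enum 'I_N) x y z H.
  have Px := sqs_pos (enum 'I_N) x. have Py := sqs_pos (enum 'I_N) y.
  set X := sqs (enum 'I_N) x in A Px Py *. set Y := sqs (enum 'I_N) y in A Px Py *.
  have sX := sqrt_pos X. have sY := sqrt_pos Y.
  have eX := sqrt_sqrt X Px. have eY := sqrt_sqrt Y Py.
  rewrite -(sqrt_pow2 (2 * (sqrt X + sqrt Y))); [|lra].
  apply sqrt_le_1_alt. nra.
Qed.

Lemma vnorm_scal {N : nat} (x z : vec N) r : (forall i, z i = r * x i) -> vnorm z = Rabs r * vnorm x.
Proof.
  intros H. rewrite !vnorm_sqs (sqs_scal _ x z r H). rewrite sqrt_mult_alt; [|apply pow2_ge_0].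
  rewrite -sqrt_Rsqr_abs. unfold Rsqr. f_equal. f_equal. ring.
Qed.

Lemma vnorm_dom {N : nat} (x y : vec N) : (forall i, Rabs (x i) <= Rabs (y i)) -> vnorm x <= vnorm y.
Proof. intros H. rewrite !vnorm_sqs. apply sqrt_le_1_alt. apply sqs_dom; exact H. Qed.

Lemma supnorm_pos {N : nat} a b (g : R -> vec N) : a <= b -> 0 <= supnorm a b g.
Proof.
  intros Hab. unfold supnorm. destruct (Lub_Rbar_correct (fun r => exists x, in_ab a b x /\ r = vnorm (g x))) as [Hub _].
  have Ha : in_ab a b a by (unfold in_ab; lra).
  have := Hub (vnorm (g a)) (ex_intro _ a (conj Ha (@Logic.eq_refl _ _))).
  destruct (Lub_Rbar _) eqn:E; simpl; try lra.
  have := vnorm_pos (g a). lra.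
Qed.

Lemma supnorm_le {N : nat} a b (g : R -> vec N) B : a <= b ->
  (forall x, in_ab a b x -> vnorm (g x) <= B) -> supnorm a b g <= B.
Proof.
  intros Hab H. unfold supnorm. destruct (Lub_Rbar_correct (fun r => exists x, in_ab a b x /\ r = vnorm (g x))) as [Hub Hl].
  have Ha : in_ab a b a by (unfold in_ab; lra).
  have K : Rbar_le (Lub_Rbar (fun r => exists x, in_ab a b x /\ r = vnorm (g x))) (Rbar.Finite B).
  { apply Hl. intros r [x [Hx ->]]. simpl. apply H; exact Hx. }
  have := H a Ha. have := vnorm_pos (g a).
  destruct (Lub_Rbar _) eqn:E; simpl in *; try lra.
Qed.

Lemma supnorm_ge {N : nat} a b (g : R -> vec N) M :
  (forall x, in_ab a b x -> vnorm (g x) <= M) -> forall x, in_ab a b x -> vnorm (g x) <= supnorm a b g.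
Proof.
  intros H x Hx. unfold supnorm. destruct (Lub_Rbar_correct (fun r => exists x, in_ab a b x /\ r = vnorm (g x))) as [Hub Hl].
  have K : Rbar_le (Lub_Rbar (fun r => exists x, in_ab a b x /\ r = vnorm (g x))) (Rbar.Finite M).
  { apply Hl. intros r [y [Hy ->]]. simpl. apply H; exact Hy. }
  have := Hub (vnorm (g x)) (ex_intro _ x (conj Hx (@Logic.eq_refl _ _))).
  destruct (Lub_Rbar _) eqn:E; simpl in *; try lra; contradiction.
Qed.

Lemma vec_bounded {N : nat} a b (g : R -> vec N) : a <= b ->
  (forall i x, in_ab a b x -> CW a b (fun t => g t i) x) ->
  exists M, forall x, in_ab a b x -> vnorm (g x) <= M.
Proof.
  intros Hab H.
  destruct (fin_max N (fun i M => forall x, in_ab a b x -> Rabs (g x i) <= M)) as [M HM].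
  { intros i M M' Hle K x Hx. have := K x Hx. lra. }
  { intros i. apply (CW_bounded a b (fun t => g t i) Hab (H i)). }
  exists (vnorm (fun _ : 'I_N => M)). intros x Hx. apply vnorm_dom. intros i.
  have := HM i x Hx. have := Rle_abs M. lra.
Qed.


Definition mx (u : R) := Rmax 0 u.
Definition qq (u : R) := mx u * mx u.
Definition Hf (d s : R) := s * qq (1 - s / d).
Definition Hd (d s : R) := qq (1 - s / d) - 2 * (s / d) * mx (1 - s / d).

Lemma qq_taylor u h : Rabs (qq (u + h) - qq u - 2 * mx u * h) <= h ^ 2.
Proof.
  unfold qq, mx, Rmax. repeat destruct Rle_dec; unfold Rabs; destruct Rcase_abs; nra.
Qed.

Lemma qq_der u : derivable_pt_lim qq u (2 * mx u).
Proof.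
  intros eps He. exists (mkposreal eps He). intros h Hh Hhd. simpl in Hhd.
  have K := qq_taylor u h.
  replace ((qq (u + h) - qq u) / h - 2 * mx u) with ((qq (u + h) - qq u - 2 * mx u * h) / h) by (field; exact Hh).
  rewrite Rabs_div; [|exact Hh].
  have Hp : 0 < Rabs h by apply Rabs_pos_lt.
  apply Rle_lt_trans with (h ^ 2 / Rabs h).
  { apply Rmult_le_compat_r; [left; apply Rinv_0_lt_compat; exact Hp| exact K]. }
  rewrite -(pow2_abs h). replace (Rabs h ^ 2 / Rabs h) with (Rabs h) by (field; lra). exact Hhd.
Qed.

Lemma mx_cont u : continuity_pt mx u.
Proof.
  intros eps He. exists eps; split; [exact He|]. intros y [_ Hy]. simpl in *. unfold R_dist in *.
  eapply Rle_lt_trans; [|exact Hy]. unfold mx, Rmax. repeat destruct Rle_dec; unfold Rabs; repeat destruct Rcase_abs; lra.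
Qed.

Lemma Hf_der d s : 0 < d -> derivable_pt_lim (Hf d) s (Hd d s).
Proof.
  intros Hd0.
  have A : derivable_pt_lim (fun s => 1 - s / d) s (- / d).
  { have := derivable_pt_lim_minus (fct_cte 1) (mult_real_fct (/ d) id) s 0 (/ d * 1)
      (derivable_pt_lim_const 1 s) (derivable_pt_lim_scal id (/ d) s 1 (derivable_pt_lim_id s)).
    intros K. replace (- / d) with (0 - / d * 1) by ring.
    intros eps He. destruct (K eps He) as [del Kd]. exists del. intros h Hh Hhd.
    have := Kd h Hh Hhd. unfold minus_fct, fct_cte, mult_real_fct, id. unfold Rdiv.
    replace (1 - (s + h) * / d - (1 - s * / d)) with (1 - / d * (s + h) - (1 - / d * s)) by ring. auto. }
  have B := derivable_pt_lim_comp (fun s => 1 - s / d) qq s (- / d) (2 * mx (1 - s / d)) A (qq_der _).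
  have C := derivable_pt_lim_mult id (comp qq (fun s => 1 - s / d)) s 1 _ (derivable_pt_lim_id s) B.
  unfold Hf, Hd. intros eps He. destruct (C eps He) as [del Kd]. exists del. intros h Hh Hhd.
  have := Kd h Hh Hhd. unfold mult_fct, comp, id.
  replace (1 * qq (1 - s / d) + s * (2 * mx (1 - s / d) * - / d)) with
    (qq (1 - s / d) - 2 * (s / d) * mx (1 - s / d)) by (field; lra). auto.
Qed.

Lemma Hd_cont d s : 0 < d -> continuity_pt (Hd d) s.
Proof.
  intros Hd0.
  have L : continuity_pt (fun s => 1 - s / d) s.
  { apply continuity_pt_minus; [apply continuity_pt_const; intros ??; reflexivity|].
    unfold Rdiv. apply continuity_pt_mult; [apply derivable_continuous_pt, derivable_pt_id| apply continuity_pt_const; intros ??; reflexivity]. }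
  have Mc : continuity_pt (fun s => mx (1 - s / d)) s := continuity_pt_comp _ mx s L (mx_cont _).
  unfold Hd, qq.
  apply continuity_pt_minus.
  - apply continuity_pt_mult; exact Mc.
  - apply continuity_pt_mult; [|exact Mc].
    apply continuity_pt_mult; [apply continuity_pt_const; intros ??; reflexivity|].
    unfold Rdiv. apply continuity_pt_mult; [apply derivable_continuous_pt, derivable_pt_id| apply continuity_pt_const; intros ??; reflexivity].
Qed.

Lemma Hf0 d : Hf d 0 = 0.
Proof. unfold Hf; ring. Qed.
Lemma Hd0 d : 0 < d -> Hd d 0 = 1.
Proof. intros H. unfold Hd, qq, mx. replace (1 - 0 / d) with 1 by (field; lra).
  rewrite Rmax_right; [|lra]. field; lra. Qed.
Lemma H_big d s : 0 < d -> d <= s -> Hf d s = 0 /\ Hd d s = 0.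
Proof.
  intros H1 H2. have : 1 - s / d <= 0.
  { have : 1 <= s / d by (apply (Rmult_le_reg_r d); [lra|]; field_simplify; lra). lra. }
  intros K. unfold Hf, Hd, qq, mx. rewrite Rmax_left; [|lra]. split; ring.
Qed.
Lemma H_bnd d s : 0 < d -> 0 <= s -> Rabs (Hf d s) <= d /\ Rabs (Hd d s) <= 1.
Proof.
  intros H1 H2. set t := s / d. have Hs : s = t * d by (unfold t; field; lra).
  have Ht : 0 <= t by (unfold t; apply Rdiv_le_0_compat; lra).
  unfold Hf, Hd, qq, mx. fold t. rewrite Hs. unfold Rmax. destruct Rle_dec as [Hu|Hu].
  - assert (A0 : 0 <= (1 - t) * (1 - t) <= 1) by (split; nra).
    assert (A : 0 <= t * ((1 - t) * (1 - t)) <= 1).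
    { split; [apply Rmult_le_pos; lra|]. replace 1 with (1 * 1) by ring. apply Rmult_le_compat; lra. }
    assert (B : -1 <= (1 - t) * (1 - t) - 2 * t * (1 - t) <= 1) by (split; nra).
    split; apply Rabs_le; [|lra].
    replace (t * d * ((1 - t) * (1 - t))) with (d * (t * ((1 - t) * (1 - t)))) by ring.
    split; [|replace d with (d * 1) at 2 by ring; apply Rmult_le_compat_l; lra].
    apply Rle_trans with 0; [lra| apply Rmult_le_pos; lra].
  - replace (t * d * (0 * 0)) with 0 by ring. replace (0 * 0 - 2 * t * 0) with 0 by ring.
    rewrite Rabs_R0; lra.
Qed.


Lemma comp_CW {N : nat} a b (f : R -> vec N -> vec N -> R) (hc : cont_dom a b f) (w w' : R -> vec N) x :
  in_ab a b x -> (forall i, CW a b (fun t => w t i) x) -> (forall i, CW a b (fun t => w' t i) x) ->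
  CW a b (fun t => f t (w t) (w' t)) x.
Proof.
  intros Hx H1 H2 eps He. destruct (hc x (w x) (w' x) Hx eps He) as [d0 [Hd0 K]].
  destruct (fin_min N (fun i d => forall y, in_ab a b y -> Rabs (y - x) < d ->
      Rabs (w y i - w x i) < d0 /\ Rabs (w' y i - w' x i) < d0)) as [d [Hd Kd]].
  { intros i d d' _ Hle P y Hy Hyd. apply P; [exact Hy| lra]. }
  { intros i. destruct (H1 i d0 Hd0) as [e1 [He1 K1]]. destruct (H2 i d0 Hd0) as [e2 [He2 K2]].
    exists (Rmin e1 e2); split; [apply Rmin_pos; assumption|]. intros y Hy Hyd. split.
    - apply K1; [exact Hy| eapply Rlt_le_trans; [exact Hyd| apply Rmin_l]].
    - apply K2; [exact Hy| eapply Rlt_le_trans; [exact Hyd| apply Rmin_r]]. }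
  exists (Rmin d d0); split; [apply Rmin_pos; assumption|]. intros y Hy Hyd.
  have Hyd1 := Rlt_le_trans _ _ _ Hyd (Rmin_l _ _). have Hyd2 := Rlt_le_trans _ _ _ Hyd (Rmin_r _ _).
  apply K; [exact Hy| exact Hyd2| intros i; apply (Kd i y Hy Hyd1)| intros i; apply (Kd i y Hy Hyd1)].
Qed.

Lemma choice_pos (P : R -> R -> Prop) : (forall t, exists r, 0 < r /\ P t r) ->
  exists g : R -> posreal, forall t, P t (g t).
Proof.
  intros H. exists (fun t => let s := constructive_indefinite_description _ (H t) in
      mkposreal (proj1_sig s) (proj1 (proj2_sig s))).
  intros t. simpl. destruct (constructive_indefinite_description _ (H t)) as [r [Hr Pr]]. exact Pr.
Qed.

Lemma BL {N : nat} a b (f : R -> vec N -> vec N -> R) (hc : cont_dom a b f) x0 (hx0 : in_ab a b x0)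
  (y0 p0 c : vec N) : exists d, 0 < d /\ exists B, forall s, -1 <= s <= 1 -> forall x, in_ab a b x ->
    Rabs (x - x0) < d -> forall y p, (forall i, Rabs (y i - y0 i) < d) ->
    (forall i, Rabs (p i - (p0 i - c i * s)) < d) -> Rabs (f x y p) <= B.
Proof.
  set C := sumabs c. have HC : 0 <= C := sumabs_pos c.
  have HcC : forall i, Rabs (c i) <= C := fun i => sumabs_ge c i.
  set pt := fun t (i : 'I_N) => p0 i - c i * t.
  destruct (choice_pos (fun t r => forall x' y' p', in_ab a b x' -> Rabs (x' - x0) < r ->
      (forall i, Rabs (y' i - y0 i) < r) -> (forall i, Rabs (p' i - pt t i) < r) ->
      Rabs (f x' y' p' - f x0 y0 (pt t)) < 1)) as [rad Hrad].
  { intros t. apply (hc x0 y0 (pt t) hx0 1 Rlt_0_1). }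
  have Hg : forall t, 0 < rad t / (2 * (1 + C)).
  { intros t. apply Rdiv_lt_0_compat; [apply cond_pos| lra]. }
  destruct (compactness_value_1d (-1) 1 (fun t => mkposreal _ (Hg t))) as [d Hd]. simpl in Hd.
  destruct (continuity_ab_maj (fun t => Rabs (f x0 y0 (pt t))) (-1) 1 ltac:(lra)) as [Mx [HM _]].
  { intros t _. apply (continuity_pt_comp (fun t => f x0 y0 (pt t)) Rabs); [|apply Rcontinuity_abs].
    intros eps He. destruct (hc x0 y0 (pt t) hx0 eps He) as [del [Hdel K]].
    exists (del / (1 + C)); split; [apply Rdiv_lt_0_compat; lra|].
    intros t' [_ Ht']. simpl in *. unfold R_dist in *. apply K; [exact hx0| | |].
    - replace (x0 - x0) with 0 by ring; rewrite Rabs_R0; exact Hdel.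
    - intros i; replace (y0 i - y0 i) with 0 by ring; rewrite Rabs_R0; exact Hdel.
    - intros i. unfold pt. replace (p0 i - c i * t' - (p0 i - c i * t)) with (c i * (t - t')) by ring.
      rewrite Rabs_mult. rewrite Rabs_minus_sym.
      apply Rle_lt_trans with (C * Rabs (t' - t)).
      { apply Rmult_le_compat_r; [apply Rabs_pos| apply HcC]. }
      apply Rle_lt_trans with ((1 + C) * Rabs (t' - t)).
      { have := Rabs_pos (t' - t). nra. }
      replace del with ((1 + C) * (del / (1 + C))) by (field; lra).
      apply Rmult_lt_compat_l; lra. }
  exists d; split; [apply cond_pos|]. exists (1 + Rabs (f x0 y0 (pt Mx))).
  intros s Hs x Hx Hxd y p Hy Hp.
  apply NNPP. intros Hneg. apply (Hd s Hs). intros [t [Ht [Hst Hdt]]]. apply Hneg.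
  have Hrt := cond_pos (rad t).
  have Hgr : rad t / (2 * (1 + C)) <= rad t.
  { set g := rad t / (2 * (1 + C)). have Hg0 : 0 < g by apply Hg.
    have E : (rad t : R) = g * (2 * (1 + C)) by (unfold g; field; lra). apply Rle_trans with (g * (2 * (1 + C))); [nra| right; symmetry; exact E]. }
  have HMt := HM t Ht. simpl in HMt.
  have : Rabs (f x y p - f x0 y0 (pt t)) < 1.
  { apply (Hrad t); [exact Hx| lra| intros i; have := Hy i; lra|]. intros i. unfold pt.
    replace (p i - (p0 i - c i * t)) with ((p i - (p0 i - c i * s)) + c i * (t - s)) by ring.
    eapply Rle_lt_trans; [apply Rabs_triang|]. rewrite Rabs_mult.
    have E1 := Hp i. have E2 : Rabs (c i) * Rabs (t - s) <= C * (rad t / (2 * (1 + C))).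
    { rewrite Rabs_minus_sym. apply Rmult_le_compat; [apply Rabs_pos| apply Rabs_pos| apply HcC| lra]. }
    have E3 : C * (rad t / (2 * (1 + C))) + rad t / (2 * (1 + C)) < rad t.
    { replace (C * (rad t / (2 * (1 + C))) + rad t / (2 * (1 + C))) with (rad t / 2) by (field; lra). lra. }
    lra. }
  have := Rabs_triang_inv (f x y p) (f x0 y0 (pt t)). lra.
Qed.


Lemma isC1_WD {N : nat} a b (u u' : R -> vec N) : is_C1 a b u u' ->
  forall i x, in_ab a b x -> WD a b (fun t => u t i) x (u' x i).
Proof. intros H i x Hx. apply WD_iff. apply (proj1 (H i) x Hx). Qed.

Lemma isC1_CW {N : nat} a b (u u' : R -> vec N) : is_C1 a b u u' ->
  forall i x, in_ab a b x -> CW a b (fun t => u t i) x /\ CW a b (fun t => u' t i) x.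
Proof. intros H i x Hx. split.
  - eapply WD_CW. apply (isC1_WD a b u u' H i x Hx).
  - apply (proj1 (CW_cont_on a b _) (proj2 (H i)) x Hx). Qed.

Lemma mk_isC1 {N : nat} a b (u u' : R -> vec N) :
  (forall i x, in_ab a b x -> WD a b (fun t => u t i) x (u' x i)) ->
  (forall i x, in_ab a b x -> CW a b (fun t => u' t i) x) -> is_C1 a b u u'.
Proof. intros H1 H2 i. split.
  - intros x Hx. apply WD_iff. apply H1; exact Hx.
  - apply CW_cont_on. apply H2. Qed.

Lemma CW_minus a b g1 g2 x : CW a b g1 x -> CW a b g2 x -> CW a b (fun t => g1 t - g2 t) x.
Proof. intros H1 H2. have := CW_plus a b g1 (fun t => -1 * g2 t) x H1 (CW_scal a b g2 x (-1) H2).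
  intros K eps He. destruct (K eps He) as [d [Hd Kd]]. exists d; split; [exact Hd|].
  intros y Hy Hyd. have := Kd y Hy Hyd. replace (g1 y + -1 * g2 y - (g1 x + -1 * g2 x)) with (g1 y - g2 y - (g1 x - g2 x)) by ring. auto. Qed.

Lemma F_CW {N : nat} a b (f : R -> vec N -> vec N -> R) (hc : cont_dom a b f) (w w' : R -> vec N) :
  is_C1 a b w w' -> forall x, in_ab a b x -> CW a b (fun t => f t (w t) (w' t)) x.
Proof. intros H x Hx. apply comp_CW; [exact hc| exact Hx| |]; intros i; apply (isC1_CW a b w w' H i x Hx). Qed.

Lemma cpt_eps g z : continuity_pt g z -> forall eps, 0 < eps -> exists d, 0 < d /\
  forall y, Rabs (y - z) < d -> Rabs (g y - g z) < eps.
Proof.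
  intros H eps He. destruct (H eps He) as [d [Hd K]]. exists d; split; [exact Hd|].
  intros y Hyd. destruct (Req_dec y z) as [->|Hne].
  { replace (g z - g z) with 0 by ring. rewrite Rabs_R0; exact He. }
  apply (K y). split; [split; [exact I| auto]| exact Hyd].
Qed.

Lemma CW_shift a b g x al : continuity_pt g (x - al) -> CW a b (fun t => g (t - al)) x.
Proof. intros H eps He. destruct (cpt_eps g _ H eps He) as [d [Hd K]]. exists d; split; [exact Hd|].
  intros y _ Hyd. apply K. replace (y - al - (x - al)) with (y - x) by ring. exact Hyd. Qed.

Lemma CW_refl a b g x be : continuity_pt g (be - x) -> CW a b (fun t => g (be - t)) x.
Proof. intros H eps He. destruct (cpt_eps g _ H eps He) as [d [Hd K]]. exists d; split; [exact Hd|].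
  intros y _ Hyd. apply K. replace (be - y - (be - x)) with (- (y - x)) by ring. rewrite Rabs_Ropp. exact Hyd. Qed.

Lemma dpl_shift g x l al : derivable_pt_lim g (x - al) l -> derivable_pt_lim (fun t => g (t - al)) x l.
Proof. intros H eps He. destruct (H eps He) as [d K]. exists d. intros h Hh Hhd.
  replace (x + h - al) with (x - al + h) by ring. apply K; assumption. Qed.

Lemma dpl_refl g x l be : derivable_pt_lim g (be - x) l -> derivable_pt_lim (fun t => g (be - t)) x (- l).
Proof. intros H eps He. destruct (H eps He) as [d K]. exists d. intros h Hh Hhd.
  have Hh' : - h <> 0 by lra. have Hhd' : Rabs (- h) < d by (rewrite Rabs_Ropp; exact Hhd).
  have := K (- h) Hh' Hhd'. replace (be - (x + h)) with (be - x + - h) by ring.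
  replace ((g (be - x + - h) - g (be - x)) / h - - l) with (- ((g (be - x + - h) - g (be - x)) / - h - l)) by (field; exact Hh).
  rewrite Rabs_Ropp. auto. Qed.

Definition cvec {N : nat} (ID : 'I_N -> bool) (w : vec N) : vec N := fun i => if ID i then 0 else w i.
Definition vd {N : nat} (v : R -> vec N) (ca cb : vec N) a b d : R -> vec N :=
  fun x i => v x i - ca i * Hf d (x - a) + cb i * Hf d (b - x).
Definition vd' {N : nat} (v' : R -> vec N) (ca cb : vec N) a b d : R -> vec N :=
  fun x i => v' x i - ca i * Hd d (x - a) - cb i * Hd d (b - x).

Lemma vd_C1 {N : nat} a b (v v' : R -> vec N) ca cb d : 0 < d -> is_C1 a b v v' ->
  is_C1 a b (vd v ca cb a b d) (vd' v' ca cb a b d).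
Proof.
  intros Hd0 H. apply mk_isC1.
  - intros i x Hx.
    have W1 := dpl_WD a b _ _ _ (dpl_shift (Hf d) x _ a (Hf_der d (x - a) Hd0)).
    have W2 := dpl_WD a b _ _ _ (dpl_refl (Hf d) x _ b (Hf_der d (b - x) Hd0)).
    have W := WD_plus a b _ _ x _ _ (WD_plus a b _ _ x _ _ (isC1_WD a b v v' H i x Hx) (WD_scal a b _ x _ (- ca i) W1))
                 (WD_scal a b _ x _ (cb i) W2).
    replace (vd' v' ca cb a b d x i) with (v' x i + - ca i * Hd d (x - a) + cb i * - Hd d (b - x))
      by (unfold vd'; ring).
    eapply WD_ext; [exact W| exact Hx|]. intros t _. unfold vd. ring.
  - intros i x Hx.
    have C1 := CW_shift a b (Hd d) x a (Hd_cont d _ Hd0).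
    have C2 := CW_refl a b (Hd d) x b (Hd_cont d _ Hd0).
    have C := CW_plus a b _ _ x (CW_plus a b _ _ x (proj2 (isC1_CW a b v v' H i x Hx)) (CW_scal a b _ x (- ca i) C1))
                 (CW_scal a b _ x (- cb i) C2).
    eapply CW_ext; [exact C| exact Hx|]. intros t _. unfold vd'. ring.
Qed.

Lemma vd_MN {N : nat} a b (IDa IDb : 'I_N -> bool) (u0 v v' : R -> vec N) d :
  0 < d -> d <= b - a -> in_M a b IDa IDb u0 v v' ->
  in_MN a b IDa IDb u0 (vd v (cvec IDa (v' a)) (cvec IDb (v' b)) a b d)
    (vd' v' (cvec IDa (v' a)) (cvec IDb (v' b)) a b d).
Proof.
  intros Hpos Hdb [HC HD].
  have [Z1 Z2] := H_big d (b - a) Hpos Hdb.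
  have E1 : b - b = 0 by ring. have E2 : a - a = 0 by ring.
  split; [split; [apply vd_C1; assumption|]|].
  - intros i. have [Da Db] := HD i. split; intros Hi; unfold vd, cvec.
    + rewrite E2 Hf0 Z1. have := Da Hi. lra.
    + rewrite E1 Hf0 Z1. have := Db Hi. lra.
  - intros i. split; intros Hi; unfold vd', cvec.
    + rewrite E2 (Hd0 d Hpos) Z2. rewrite (negbTE Hi). ring.
    + rewrite E1 (Hd0 d Hpos) Z2. rewrite (negbTE Hi). ring.
Qed.


Lemma cvec_bnd {N : nat} (ID : 'I_N -> bool) (w w0 : vec N) S1 :
  (forall i, ~~ ID i -> w0 i = 0) -> vnorm (fun i => w i - w0 i) <= S1 -> vnorm (cvec ID w) <= S1.
Proof.
  intros H K. eapply Rle_trans; [|exact K]. apply vnorm_dom. intros i. unfold cvec.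
  destruct (ID i) eqn:E.
  - rewrite Rabs_R0; apply Rabs_pos.
  - rewrite H; [|by rewrite E]. right; f_equal; ring.
Qed.

Lemma two_terms {N : nat} (ca cb : vec N) r1 r2 S1 :
  Rabs r1 <= 1 -> Rabs r2 <= 1 -> vnorm ca <= S1 -> vnorm cb <= S1 ->
  vnorm (fun i => r1 * ca i + r2 * cb i) <= 4 * S1.
Proof.
  intros H1 H2 Ha Hb.
  have E := vnorm_add (fun i => r1 * ca i) (fun i => r2 * cb i) (fun i => r1 * ca i + r2 * cb i) (fun i => Logic.eq_refl).
  rewrite (vnorm_scal ca (fun i => r1 * ca i) r1 (fun i => Logic.eq_refl)) in E.
  rewrite (vnorm_scal cb (fun i => r2 * cb i) r2 (fun i => Logic.eq_refl)) in E.
  have := vnorm_pos ca. have := vnorm_pos cb. have := Rabs_pos r1. have := Rabs_pos r2.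
  intros. have : Rabs r1 * vnorm ca <= S1 by nra. have : Rabs r2 * vnorm cb <= S1 by nra. lra.
Qed.

Lemma vd_dist {N : nat} a b (IDa IDb : 'I_N -> bool) (u0 u0' v v' : R -> vec N) d S0 S1 :
  a <= b -> 0 < d -> d <= 1 ->
  (forall x, in_ab a b x -> vnorm (fun i => v x i - u0 x i) <= S0) ->
  (forall x, in_ab a b x -> vnorm (fun i => v' x i - u0' x i) <= S1) ->
  (forall i, ~~ IDa i -> u0' a i = 0) -> (forall i, ~~ IDb i -> u0' b i = 0) ->
  0 <= S0 -> 0 <= S1 ->
  C1dist a b (vd v (cvec IDa (v' a)) (cvec IDb (v' b)) a b d)
    (vd' v' (cvec IDa (v' a)) (cvec IDb (v' b)) a b d) u0 u0' <= 2 * S0 + 18 * S1.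
Proof.
  intros Hab Hd0 Hd1 B0 B1 Na Nb P0 P1.
  have Ha : in_ab a b a by (unfold in_ab; lra). have Hb : in_ab a b b by (unfold in_ab; lra).
  have Ca := cvec_bnd IDa (v' a) (u0' a) S1 Na (B1 a Ha).
  have Cb := cvec_bnd IDb (v' b) (u0' b) S1 Nb (B1 b Hb).
  unfold C1dist.
  have X1 : supnorm a b (fun x i => vd v (cvec IDa (v' a)) (cvec IDb (v' b)) a b d x i - u0 x i) <= 2 * S0 + 8 * S1.
  { apply supnorm_le; [exact Hab|]. intros x Hx. have [xa xb] := Hx.
    have [Ka _] := H_bnd d (x - a) Hd0 ltac:(lra). have [Kb _] := H_bnd d (b - x) Hd0 ltac:(lra).
    have T := two_terms (cvec IDa (v' a)) (cvec IDb (v' b)) (- Hf d (x - a) / d) (Hf d (b - x) / d) S1.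
    have E := vnorm_add (fun i => v x i - u0 x i)
      (fun i => d * ((- Hf d (x - a) / d) * cvec IDa (v' a) i + (Hf d (b - x) / d) * cvec IDb (v' b) i))
      (fun i => vd v (cvec IDa (v' a)) (cvec IDb (v' b)) a b d x i - u0 x i) ltac:(intros i; unfold vd; field; lra).
    rewrite (vnorm_scal _ _ d (fun i => Logic.eq_refl)) in E.
    have R1 : Rabs (- Hf d (x - a) / d) <= 1.
    { unfold Rdiv; rewrite Rabs_mult Rabs_Ropp Rabs_inv (Rabs_pos_eq d); [|lra].
      apply (Rmult_le_reg_r d); [lra|]. field_simplify; lra. }
    have R2 : Rabs (Hf d (b - x) / d) <= 1.
    { unfold Rdiv; rewrite Rabs_mult Rabs_inv (Rabs_pos_eq d); [|lra].
      apply (Rmult_le_reg_r d); [lra|]. field_simplify; lra. }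
    have T' := T R1 R2 Ca Cb. have := B0 x Hx. rewrite (Rabs_pos_eq d) in E; [|lra].
    have := vnorm_pos (fun i => - Hf d (x - a) / d * cvec IDa (v' a) i + Hf d (b - x) / d * cvec IDb (v' b) i).
    intros. simpl. nra. }
  have X2 : supnorm a b (fun x i => vd' v' (cvec IDa (v' a)) (cvec IDb (v' b)) a b d x i - u0' x i) <= 10 * S1.
  { apply supnorm_le; [exact Hab|]. intros x Hx. have [xa xb] := Hx.
    have [_ Ka] := H_bnd d (x - a) Hd0 ltac:(lra). have [_ Kb] := H_bnd d (b - x) Hd0 ltac:(lra).
    have T := two_terms (cvec IDa (v' a)) (cvec IDb (v' b)) (- Hd d (x - a)) (- Hd d (b - x)) S1.
    rewrite !Rabs_Ropp in T. have T' := T Ka Kb Ca Cb.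
    have E := vnorm_add (fun i => v' x i - u0' x i)
      (fun i => (- Hd d (x - a)) * cvec IDa (v' a) i + (- Hd d (b - x)) * cvec IDb (v' b) i)
      (fun i => vd' v' (cvec IDa (v' a)) (cvec IDb (v' b)) a b d x i - u0' x i) ltac:(intros i; unfold vd'; ring).
    have := B1 x Hx. simpl. lra. }
  lra.
Qed.


Lemma cont_near {N : nat} a b (v v' : R -> vec N) x0 e : is_C1 a b v v' -> in_ab a b x0 -> 0 < e ->
  exists eta, 0 < eta /\ forall i y, in_ab a b y -> Rabs (y - x0) < eta ->
    Rabs (v y i - v x0 i) < e /\ Rabs (v' y i - v' x0 i) < e.
Proof.
  intros H Hx0 He.
  destruct (fin_min N (fun i d => forall y, in_ab a b y -> Rabs (y - x0) < d ->
      Rabs (v y i - v x0 i) < e /\ Rabs (v' y i - v' x0 i) < e)) as [d [Hd Kd]].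
  { intros i d d' _ Hle P y Hy Hyd. apply P; [exact Hy| lra]. }
  { intros i. have [C1 C2] := isC1_CW a b v v' H i x0 Hx0.
    destruct (C1 e He) as [e1 [He1 K1]]. destruct (C2 e He) as [e2 [He2 K2]].
    exists (Rmin e1 e2); split; [apply Rmin_pos; assumption|]. intros y Hy Hyd. split.
    - apply K1; [exact Hy| eapply Rlt_le_trans; [exact Hyd| apply Rmin_l]].
    - apply K2; [exact Hy| eapply Rlt_le_trans; [exact Hyd| apply Rmin_r]]. }
  exists d; split; [exact Hd|]. intros i y Hy Hyd. apply Kd; assumption.
Qed.

Lemma claimB {N : nat} a b (f : R -> vec N -> vec N -> R) (hc : cont_dom a b f) (v v' : R -> vec N)
  (ca cb : vec N) : a < b -> is_C1 a b v v' ->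
  exists d0, 0 < d0 /\ exists K, forall d, 0 < d -> d < d0 -> 2 * d <= b - a ->
    Phi f a b (vd v ca cb a b d) (vd' v' ca cb a b d) <= Phi f a b v v' + K * d.
Proof.
  intros Hab HC.
  have Ha : in_ab a b a by (unfold in_ab; lra). have Hb : in_ab a b b by (unfold in_ab; lra).
  destruct (BL a b f hc a Ha (v a) (v' a) ca) as [d1 [Hd1 [B1 KB1]]].
  destruct (BL a b f hc b Hb (v b) (v' b) cb) as [d2 [Hd2 [B2 KB2]]].
  destruct (cont_near a b v v' a (d1 / 2) HC Ha ltac:(lra)) as [e1 [He1 Ke1]].
  destruct (cont_near a b v v' b (d2 / 2) HC Hb ltac:(lra)) as [e2 [He2 Ke2]].
  set C := sumabs ca + sumabs cb + 1.
  have HC0 : 0 < C by (have := sumabs_pos ca; have := sumabs_pos cb; unfold C; lra).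
  have Hca : forall i, Rabs (ca i) <= C by (intros i; have := sumabs_ge ca i; have := sumabs_pos cb; unfold C; lra).
  have Hcb : forall i, Rabs (cb i) <= C by (intros i; have := sumabs_ge cb i; have := sumabs_pos ca; unfold C; lra).
  set d0 := Rmin (Rmin e1 e2) (Rmin (Rmin d1 d2) (Rmin (d1 / (2 * C)) (d2 / (2 * C)))).
  have Hd0p : 0 < d0.
  { unfold d0. repeat apply Rmin_pos; try assumption; apply Rdiv_lt_0_compat; lra. }
  exists d0; split; [exact Hd0p|].
  set B := Rabs B1 + Rabs B2.
  exists (4 * B). intros d Hdp Hdd Hd2b.
  have Le1 : d < e1 by (eapply Rlt_le_trans; [exact Hdd|]; unfold d0; eapply Rle_trans; [apply Rmin_l| apply Rmin_l]).
  have Le2 : d < e2 by (eapply Rlt_le_trans; [exact Hdd|]; unfold d0; eapply Rle_trans; [apply Rmin_l| apply Rmin_r]).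
  have Ld1 : d < d1.
  { eapply Rlt_le_trans; [exact Hdd|]; unfold d0; eapply Rle_trans; [apply Rmin_r|]; eapply Rle_trans; [apply Rmin_l| apply Rmin_l]. }
  have Ld2 : d < d2.
  { eapply Rlt_le_trans; [exact Hdd|]; unfold d0; eapply Rle_trans; [apply Rmin_r|]; eapply Rle_trans; [apply Rmin_l| apply Rmin_r]. }
  have Lc1 : C * d < d1 / 2.
  { have : d < d1 / (2 * C).
    { eapply Rlt_le_trans; [exact Hdd|]; unfold d0; eapply Rle_trans; [apply Rmin_r|]; eapply Rle_trans; [apply Rmin_r| apply Rmin_l]. }
    intros K. apply (Rmult_lt_compat_l C) in K; [|exact HC0].
    replace (C * (d1 / (2 * C))) with (d1 / 2) in K by (field; lra). exact K. }
  have Lc2 : C * d < d2 / 2.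
  { have : d < d2 / (2 * C).
    { eapply Rlt_le_trans; [exact Hdd|]; unfold d0; eapply Rle_trans; [apply Rmin_r|]; eapply Rle_trans; [apply Rmin_r| apply Rmin_r]. }
    intros K. apply (Rmult_lt_compat_l C) in K; [|exact HC0].
    replace (C * (d2 / (2 * C))) with (d2 / 2) in K by (field; lra). exact K. }
  set F := fun x => f x (vd v ca cb a b d x) (vd' v' ca cb a b d x).
  set F0 := fun x => f x (v x) (v' x).
  set G := fun x => F x - F0 x.
  have HCd := vd_C1 a b v v' ca cb d Hdp HC.
  have CF : forall x, in_ab a b x -> CW a b F x := F_CW a b f hc _ _ HCd.
  have CF0 : forall x, in_ab a b x -> CW a b F0 x := F_CW a b f hc _ _ HC.
  have CG : forall x, in_ab a b x -> CW a b G x by (intros x Hx; apply CW_minus; auto).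
  have IF := CW_ex_RInt a b F ltac:(lra) CF. have IF0 := CW_ex_RInt a b F0 ltac:(lra) CF0.
  have IG := CW_ex_RInt a b G ltac:(lra) CG.
  have EG : RInt G a b = RInt F a b - RInt F0 a b.
  { have := RInt_minus F F0 a b IF IF0. intros E.
    transitivity (RInt (fun x => minus (F x) (F0 x)) a b); [|exact E].
    apply RInt_ext. intros x _. reflexivity. }
  have BA : forall x, a <= x <= a + d -> Rabs (G x) <= 2 * B.
  { intros x [xa xb]. have Hx : in_ab a b x by (unfold in_ab; lra).
    have Hxa : Rabs (x - a) < d1 by (rewrite Rabs_pos_eq; lra).
    have Hxe : Rabs (x - a) < e1 by (rewrite Rabs_pos_eq; lra).
    have [Z1 Z2] := H_big d (b - x) Hdp ltac:(lra).
    have [Hb1 Hb2] := H_bnd d (x - a) Hdp ltac:(lra).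
    have A1 : Rabs (F x) <= B1.
    { apply (KB1 (Hd d (x - a))); [apply Rabs_le_between; exact Hb2| exact Hx| exact Hxa| |].
      - intros i. have [K1 _] := Ke1 i x Hx Hxe. unfold vd. rewrite Z1.
        replace (v x i - ca i * Hf d (x - a) + cb i * 0 - v a i) with ((v x i - v a i) + - (ca i * Hf d (x - a))) by ring.
        eapply Rle_lt_trans; [apply Rabs_triang|]. rewrite Rabs_Ropp Rabs_mult.
        have : Rabs (ca i) * Rabs (Hf d (x - a)) <= C * d by (apply Rmult_le_compat; [apply Rabs_pos| apply Rabs_pos| apply Hca| exact Hb1]).
        lra.
      - intros i. have [_ K2] := Ke1 i x Hx Hxe. unfold vd'. rewrite Z2.
        replace (v' x i - ca i * Hd d (x - a) - cb i * 0 - (v' a i - ca i * Hd d (x - a))) with (v' x i - v' a i) by ring. lra. }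
    have A2 : Rabs (F0 x) <= B1.
    { apply (KB1 0); [lra| exact Hx| exact Hxa| |].
      - intros i. have [K1 _] := Ke1 i x Hx Hxe. lra.
      - intros i. have [_ K2] := Ke1 i x Hx Hxe.
        replace (v' x i - (v' a i - ca i * 0)) with (v' x i - v' a i) by ring. lra. }
    unfold G. eapply Rle_trans; [apply Rabs_triang|]. rewrite Rabs_Ropp.
    have := Rle_abs B1. have := Rabs_pos B2. unfold B. lra. }
  have BB : forall x, b - d <= x <= b -> Rabs (G x) <= 2 * B.
  { intros x [xa xb]. have Hx : in_ab a b x by (unfold in_ab; lra).
    have Hxa : Rabs (x - b) < d2 by (rewrite Rabs_minus_sym Rabs_pos_eq; lra).
    have Hxe : Rabs (x - b) < e2 by (rewrite Rabs_minus_sym Rabs_pos_eq; lra).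
    have [Z1 Z2] := H_big d (x - a) Hdp ltac:(lra).
    have [Hb1 Hb2] := H_bnd d (b - x) Hdp ltac:(lra).
    have A1 : Rabs (F x) <= B2.
    { apply (KB2 (Hd d (b - x))); [apply Rabs_le_between; exact Hb2| exact Hx| exact Hxa| |].
      - intros i. have [K1 _] := Ke2 i x Hx Hxe. unfold vd. rewrite Z1.
        replace (v x i - ca i * 0 + cb i * Hf d (b - x) - v b i) with ((v x i - v b i) + (cb i * Hf d (b - x))) by ring.
        eapply Rle_lt_trans; [apply Rabs_triang|]. rewrite Rabs_mult.
        have : Rabs (cb i) * Rabs (Hf d (b - x)) <= C * d by (apply Rmult_le_compat; [apply Rabs_pos| apply Rabs_pos| apply Hcb| exact Hb1]).
        lra.
      - intros i. have [_ K2] := Ke2 i x Hx Hxe. unfold vd'. rewrite Z2.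
        replace (v' x i - ca i * 0 - cb i * Hd d (b - x) - (v' b i - cb i * Hd d (b - x))) with (v' x i - v' b i) by ring. lra. }
    have A2 : Rabs (F0 x) <= B2.
    { apply (KB2 0); [lra| exact Hx| exact Hxa| |].
      - intros i. have [K1 _] := Ke2 i x Hx Hxe. lra.
      - intros i. have [_ K2] := Ke2 i x Hx Hxe.
        replace (v' x i - (v' b i - cb i * 0)) with (v' x i - v' b i) by ring. lra. }
    unfold G. eapply Rle_trans; [apply Rabs_triang|]. rewrite Rabs_Ropp.
    have := Rle_abs B2. have := Rabs_pos B1. unfold B. lra. }
  have MID : RInt G (a + d) (b - d) = 0.
  { rewrite (RInt_ext G (fun _ => 0)).
    - rewrite RInt_const. apply (scal_zero_r (V:=R_NormedModule)).
    - intros x Hx. rewrite Rmin_left in Hx; [|lra]. rewrite Rmax_right in Hx; [|lra].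
      have [Z1 Z2] := H_big d (x - a) Hdp ltac:(lra). have [Z3 Z4] := H_big d (b - x) Hdp ltac:(lra).
      unfold G, F, F0.
      have -> : vd v ca cb a b d x = v x.
      { apply functional_extensionality. intros i. unfold vd. rewrite Z1 Z3. ring. }
      have -> : vd' v' ca cb a b d x = v' x.
      { apply functional_extensionality. intros i. unfold vd'. rewrite Z2 Z4. ring. }
      apply Rminus_diag_eq; reflexivity. }
  have I1 : ex_RInt G a (a + d) by (apply (ex_RInt_Chasles_1 G a (a + d) b); [lra| exact IG]).
  have I2 : ex_RInt G (a + d) b by (apply (ex_RInt_Chasles_2 G a (a + d) b); [lra| exact IG]).
  have I3 : ex_RInt G (a + d) (b - d) by (apply (ex_RInt_Chasles_1 G (a + d) (b - d) b); [lra| exact I2]).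
  have I4 : ex_RInt G (b - d) b by (apply (ex_RInt_Chasles_2 G (a + d) (b - d) b); [lra| exact I2]).
  have Ch1 : RInt G a (a + d) + RInt G (a + d) b = RInt G a b := RInt_Chasles G a (a + d) b I1 I2.
  have Ch2 : RInt G (a + d) (b - d) + RInt G (b - d) b = RInt G (a + d) b := RInt_Chasles G (a + d) (b - d) b I3 I4.
  have E1 := abs_RInt_le_const G a (a + d) (2 * B) ltac:(lra) I1 BA.
  have E2 := abs_RInt_le_const G (b - d) b (2 * B) ltac:(lra) I4 BB.
  have E1' := Rle_abs (RInt G a (a + d)). have E2' := Rle_abs (RInt G (b - d) b).
  unfold Phi. fold F. fold F0.
  replace (a + d - a) with d in E1 by ring. replace (b - (b - d)) with d in E2 by ring.
  lra.
Qed.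


Theorem proposition7p2 (N : nat) (a b : R) (hab : a < b)
  (f : R -> vec N -> vec N -> R) (hf : is_C1_lagr a b f)
  (u0 u0' : R -> vec N) (hu0 : is_C1 a b u0 u0')
  (IDa IDb : 'I_N -> bool) :
  (weak_min f a b (in_MN a b IDa IDb u0) u0 u0' ->
     weak_min f a b (in_M a b IDa IDb u0) u0 u0') /\
  (weak_min f a b (in_M a b IDa IDb u0) u0 u0' ->
     in_MN a b IDa IDb u0 u0 u0' ->
     weak_min f a b (in_MN a b IDa IDb u0) u0 u0').
Proof.
  have hc : cont_dom a b f := proj1 hf.
  split.
  - intros [[Hu0M Hu0N] [eps [He Hmin]]]. split; [exact Hu0M|].
    exists (eps / 18). split; [lra|]. intros v v' Hv Hdist.
    have HvC := proj1 Hv.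
    have Hab : a <= b by lra.
    set S0 := supnorm a b (fun x i => v x i - u0 x i).
    set S1 := supnorm a b (fun x i => v' x i - u0' x i).
    have P0 : 0 <= S0 := supnorm_pos a b _ Hab.
    have P1 : 0 <= S1 := supnorm_pos a b _ Hab.
    have B0 : forall x, in_ab a b x -> vnorm (fun i => v x i - u0 x i) <= S0.
    { destruct (vec_bounded a b (fun x i => v x i - u0 x i) Hab) as [M HM].
      { intros i x Hx. apply CW_minus; [apply (isC1_CW a b v v' HvC i x Hx)| apply (isC1_CW a b u0 u0' hu0 i x Hx)]. }
      exact (supnorm_ge a b _ M HM). }
    have B1 : forall x, in_ab a b x -> vnorm (fun i => v' x i - u0' x i) <= S1.
    { destruct (vec_bounded a b (fun x i => v' x i - u0' x i) Hab) as [M HM].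
      { intros i x Hx. apply CW_minus; [apply (isC1_CW a b v v' HvC i x Hx)| apply (isC1_CW a b u0 u0' hu0 i x Hx)]. }
      exact (supnorm_ge a b _ M HM). }
    have Na : forall i, ~~ IDa i -> u0' a i = 0 by (intros i Hi; exact (proj1 (Hu0N i) Hi)).
    have Nb : forall i, ~~ IDb i -> u0' b i = 0 by (intros i Hi; exact (proj2 (Hu0N i) Hi)).
    have Hd : S0 + S1 < eps / 18 by exact Hdist.
    destruct (claimB a b f hc v v' (cvec IDa (v' a)) (cvec IDb (v' b)) hab HvC) as [d0 [Hd0 [K HK]]].
    apply Rnot_lt_le. intros Hlt.
    set gap := Phi f a b u0 u0' - Phi f a b v v'.
    have Hgap : 0 < gap by (unfold gap; lra).
    set d := Rmin (Rmin (d0 / 2) ((b - a) / 2)) (Rmin 1 (gap / (2 * (Rabs K + 1)))).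
    have Hdp : 0 < d.
    { unfold d. repeat apply Rmin_pos; try lra. apply Rdiv_lt_0_compat; [lra|]. have := Rabs_pos K; lra. }
    assert (Hdd0' : d <= d0 / 2) by (unfold d; eapply Rle_trans; [apply Rmin_l| apply Rmin_l]).
    assert (Hdd0 : d < d0) by lra.
    assert (Hdba' : d <= (b - a) / 2) by (unfold d; eapply Rle_trans; [apply Rmin_l| apply Rmin_r]).
    assert (Hdba : 2 * d <= b - a) by lra.
    have Hd1 : d <= 1 by (unfold d; eapply Rle_trans; [apply Rmin_r| apply Rmin_l]).
    have Hdg : d <= gap / (2 * (Rabs K + 1)) by (unfold d; eapply Rle_trans; [apply Rmin_r| apply Rmin_r]).
    have Up := HK d Hdp Hdd0 Hdba.
    have Low : Phi f a b u0 u0' <= Phi f a b (vd v (cvec IDa (v' a)) (cvec IDb (v' b)) a b d)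
                 (vd' v' (cvec IDa (v' a)) (cvec IDb (v' b)) a b d).
    { apply Hmin.
      - apply vd_MN; [exact Hdp| lra| exact Hv].
      - have := vd_dist a b IDa IDb u0 u0' v v' d S0 S1 Hab Hdp Hd1 B0 B1 Na Nb P0 P1. lra. }
    have Kd : K * d <= gap / 2.
    { have := Rle_abs K. have HK1 : 0 < Rabs K + 1 by (have := Rabs_pos K; lra).
      have : (Rabs K + 1) * d <= gap / 2.
      { apply Rle_trans with ((Rabs K + 1) * (gap / (2 * (Rabs K + 1)))).
        - apply Rmult_le_compat_l; lra.
        - right; field; lra. }
      nra. }
    unfold gap in *. lra.
  - intros [HM [eps [He Hmin]]] HMN. split; [exact HMN|].
    exists eps; split; [exact He|]. intros v v' Hv Hd. apply Hmin; [exact (proj1 Hv)| exact Hd].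
Qed.
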